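(* Let $\mathbf{A}=(a_{ij})$ be a table with nonnegative entries, let $(R_1,\dots,R_k)$ be a proper partition of its row set and $(C_1,\dots,C_k)$ a proper partition of its column set, and set $s_{ab}=\sum_{i\in R_a}\sum_{j\in C_b}a_{ij}$ for $1\le a,b\le k$. Suppose the $k\times k$ matrix $(s_{ab})$ is an independent table, i.e. $s_{ab}=\big(\sum_{b'=1}^k s_{ab'}\big)\big(\sum_{a'=1}^k s_{a'b}\big)$ for all $a,b$. Then ${\mathrm{disc}}_\ell(\mathbf{A})\le{\mathrm{disc}}_1(\mathbf{A})$ for every $\ell=2,\dots,k$.
   Context: Standing assumptions: $\mathbf{A}$ is an $m\times n$ array of nonnegative entries whose total sum is $1$, and $\mathbf{A}$ is non-decomposable ($\mathbf{A}\mathbf{A}^T$ if $m\le n$, or $\mathbf{A}^T\mathbf{A}$ if $m>n$, is irreducible); in particular all row sums $d_{row,i}=\sum_j a_{ij}$ and column sums $d_{col,j}=\sum_i a_{ij}$ are positive. Let $R$ be the row set and $C$ the column set. For $X\subset R$, $Y\subset C$: ${\mathrm{Vol}}(X)=\sum_{i\in X}d_{row,i}$, ${\mathrm{Vol}}(Y)=\sum_{j\in Y}d_{col,j}$, $a(X,Y)=\sum_{i\in X}\sum_{j\in Y}a_{ij}$, and for nonempty $X,Y$, $\rho(X,Y)=\frac{a(X,Y)}{{\mathrm{Vol}}(X){\mathrm{Vol}}(Y)}$. For a proper $k$-partition $R_1,\dots,R_k$ of $R$ and $C_1,\dots,C_k$ of $C$ (all parts nonempty), and nonempty $X\subset R_a$,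 $Y\subset C_b$, ${\mathrm{disc}}(X,Y;R_a,C_b)=|\rho(X,Y)-\rho(R_a,C_b)|\sqrt{{\mathrm{Vol}}(X){\mathrm{Vol}}(Y)}$; ${\mathrm{disc}}(\mathbf{A};R_1,\dots,R_k,C_1,\dots,C_k)=\max_{1\le a,b\le k}\max_{X\subset R_a,\,Y\subset C_b}{\mathrm{disc}}(X,Y;R_a,C_b)$; and ${\mathrm{disc}}_k(\mathbf{A})$ is the minimum of this quantity over all proper $k$-partitions of the rows and of the columns. (For $k=1$ the partition is $R$, $C$ themselves.) *)

(* Defs.v *)
From mathcomp Require Import all_boot all_order all_algebra.
Set Implicit Arguments. Unset Strict Implicit. Unset Printing Implicit Defensive.
Import Order.TTheory GRing.Theory Num.Theory.
Local Open Scope ring_scope.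

Section Defs.
Variables (R : rcfType) (m n : nat) (A : 'M[R]_(m, n)).

Definition drow (i : 'I_m) : R := \sum_(j < n) A i j.
Definition dcol (j : 'I_n) : R := \sum_(i < m) A i j.

Definition volR (X : {set 'I_m}) : R := \sum_(i in X) drow i.
Definition volC (Y : {set 'I_n}) : R := \sum_(j in Y) dcol j.

Definition aXY (X : {set 'I_m}) (Y : {set 'I_n}) : R :=
  \sum_(i in X) \sum_(j in Y) A i j.

Definition rho X Y : R := aXY X Y / (volR X * volC Y).

Definition discXY (X : {set 'I_m}) (Y : {set 'I_n}) Ra Cb : R :=
  `|rho X Y - rho Ra Cb| * Num.sqrt (volR X * volC Y).

(* a k-partition of a finite index type is encoded by a labelling map into 'I_k;
   part a is the preimage of a; it is proper iff every part is nonempty *)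
Definition part (T : finType) k (f : {ffun T -> 'I_k}) (a : 'I_k) : {set T} :=
  [set x | f x == a].

Definition proper_part (T : finType) k (f : {ffun T -> 'I_k}) : bool :=
  [forall a, exists x, f x == a].

(* disc(A; R_1..R_k, C_1..C_k); all disc values are >= 0, so 0 is a neutral
   start for the max *)
Definition disc_part k (f : {ffun 'I_m -> 'I_k}) (g : {ffun 'I_n -> 'I_k}) : R :=
  \big[Num.max/0]_(a < k) \big[Num.max/0]_(b < k)
   \big[Num.max/0]_(X : {set 'I_m} | (X != set0) && (X \subset part f a))
    \big[Num.max/0]_(Y : {set 'I_n} | (Y != set0) && (Y \subset part g b))
      discXY X Y (part f a) (part g b).

(* disc_k(A): minimum of disc_part over all proper k-partitions of rows and
   columns (the list of values is nonempty whenever 1 <= k <= min(m,n);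
   otherwise the value is the arbitrary default 0) *)
Definition disck (k : nat) : R :=
  let s := [seq disc_part fg.1 fg.2 |
             fg <- enum [pred fg : {ffun 'I_m -> 'I_k} * {ffun 'I_n -> 'I_k} |
                          proper_part fg.1 && proper_part fg.2]] in
  \big[Num.min/head 0 s]_(x <- s) x.

Definition blocksum k (f : {ffun 'I_m -> 'I_k}) (g : {ffun 'I_n -> 'I_k}) a b : R :=
  aXY (part f a) (part g b).

End Defs.

Definition irreducible_mx (R : rcfType) (p : nat) (B : 'M[R]_p) : Prop :=
  forall i j : 'I_p, exists t : nat, 0 < (iter t (mulmx B) 1%:M) i j.

Definition nondecomposable (R : rcfType) (m n : nat) (A : 'M[R]_(m, n)) : Prop :=
  if (m <= n)%N then irreducible_mx (A *m A^T) else irreducible_mx (A^T *m A).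

(* Main.v *)
Require Import Defs.
From mathcomp Require Import all_boot all_order all_algebra.
Import Order.TTheory GRing.Theory Num.Theory.
Local Open Scope ring_scope.

Section Helpers.
Variables (R : rcfType) (m n : nat) (A : 'M[R]_(m, n)).
Hypothesis A_nneg : forall i j, 0 <= A i j.

Lemma volR_ge0 X : 0 <= volR A X.
Proof. by apply: sumr_ge0 => i _; apply: sumr_ge0. Qed.
Lemma volC_ge0 Y : 0 <= volC A Y.
Proof. by apply: sumr_ge0 => i _; apply: sumr_ge0. Qed.

Lemma volR_sub (X Y : {set 'I_m}) : X \subset Y -> volR A X <= volR A Y.
Proof.
move=> XY; rewrite /volR (big_mkcond (fun i => i \in X)) (big_mkcond (fun i => i \in Y)).
apply: ler_sum => i _; case: ifP => iX; first by rewrite (subsetP XY i iX).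
by case: ifP => // _; apply: sumr_ge0.
Qed.
Lemma volC_sub (X Y : {set 'I_n}) : X \subset Y -> volC A X <= volC A Y.
Proof.
move=> XY; rewrite /volC (big_mkcond (fun i => i \in X)) (big_mkcond (fun i => i \in Y)).
apply: ler_sum => i _; case: ifP => iX; first by rewrite (subsetP XY i iX).
by case: ifP => // _; apply: sumr_ge0.
Qed.

Lemma discXY_ge0 X Y P Q : 0 <= discXY A X Y P Q.
Proof. by rewrite /discXY mulr_ge0 // sqrtr_ge0. Qed.

End Helpers.

Lemma sum_part (R : rcfType) (T : finType) k (f : {ffun T -> 'I_k}) (F : T -> R) :
  \sum_(i : T) F i = \sum_(b < k) \sum_(i in part f b) F i.
Proof.
rewrite (partition_big f xpredT) //; apply: eq_bigr => b _.
by apply: eq_bigl => i; rewrite inE.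
Qed.

Lemma sum_merge (R : rcfType) (T : finType) k l (f : {ffun T -> 'I_k})
  (h : 'I_k -> 'I_l) (F : T -> R) a :
  \sum_(i in part [ffun i => h (f i)] a) F i =
  \sum_(a0 < k | h a0 == a) \sum_(i in part f a0) F i.
Proof.
rewrite (partition_big f (fun a0 => h a0 == a)); last by move=> i; rewrite inE ffunE.
apply: eq_bigr => a0 ha0; apply: eq_bigl => i; rewrite !inE ffunE.
by case: (f i =P a0) => [->|]; rewrite ?ha0 ?andbF.
Qed.

Lemma bigmax0_ge0 (R : rcfType) (I : Type) (r : seq I) (P : pred I) (F : I -> R) :
  0 <= \big[Num.max/0]_(i <- r | P i) F i.
Proof.
elim: r => [|x r IH]; rewrite ?big_nil ?big_cons //.
by case: ifP => _ //; rewrite le_max IH orbT.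
Qed.

Lemma bigmin_seq_le (R : rcfType) (s : seq R) d x0 :
  x0 \in s -> \big[Num.min/d]_(x <- s) x <= x0.
Proof.
elim: s => [|y s IH] //; rewrite inE big_cons => /orP[/eqP->|xs].
  by rewrite ge_min lexx.
by rewrite ge_min IH ?orbT.
Qed.

Lemma le_bigmin_seq (R : rcfType) (s : seq R) c :
  s != [::] -> (forall x, x \in s -> c <= x) -> c <= \big[Num.min/head 0 s]_(x <- s) x.
Proof.
case: s => [|x0 s] // _ H; rewrite big_seq; apply: le_bigmin.
  by apply: H; rewrite mem_head.
by move=> i; apply: H.
Qed.

Section Main.
Variables (R : rcfType) (m n k : nat) (A : 'M[R]_(m, n)).
Hypothesis A_nneg : forall i j, 0 <= A i j.
Hypothesis A_sum : \sum_(i < m) \sum_(j < n) A i j = 1.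
Variables (f : {ffun 'I_m -> 'I_k}) (g : {ffun 'I_n -> 'I_k}).
Hypothesis hind : forall a b : 'I_k,
     blocksum A f g a b =
       (\sum_(b' < k) blocksum A f g a b') * (\sum_(a' < k) blocksum A f g a' b).

Lemma volR_part a : volR A (part f a) = \sum_(b < k) blocksum A f g a b.
Proof.
rewrite /volR /drow.
under eq_bigr => i _ do rewrite (@sum_part R _ _ g).
by rewrite exchange_big.
Qed.

Lemma volC_part b : volC A (part g b) = \sum_(a < k) blocksum A f g a b.
Proof.
rewrite /volC /dcol.
under eq_bigr => j _ do rewrite (@sum_part R _ _ f (fun i => A i j)).
rewrite exchange_big; apply: eq_bigr => a _.
by rewrite /blocksum /aXY exchange_big.
Qed.

Variables (l : nat) (h : 'I_k -> 'I_l).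

Lemma merged_indep a b :
  aXY A (part [ffun i => h (f i)] a) (part [ffun j => h (g j)] b) =
  volR A (part [ffun i => h (f i)] a) * volC A (part [ffun j => h (g j)] b).
Proof.
rewrite /volR /volC !sum_merge big_distrl /= /aXY.
rewrite (@sum_merge R _ k l f h (fun i => \sum_(j in part [ffun j => h (g j)] b) A i j) a).
apply: eq_bigr => a0 _.
transitivity (\sum_(i in part f a0) \sum_(b0 < k | h b0 == b) \sum_(j in part g b0) A i j).
  by apply: eq_bigr => i _; rewrite sum_merge.
rewrite exchange_big /= big_distrr /=; apply: eq_bigr => b0 _.
have := hind a0 b0; rewrite -volR_part -volC_part /blocksum /aXY => ->.
by [].
Qed.

End Main.

Lemma sumT (R : rcfType) (T : finType) (F : T -> R) :
  \sum_(i in [set: T]) F i = \sum_i F i.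
Proof. by apply: eq_bigl => i; rewrite inE. Qed.

Lemma rhoTT (R : rcfType) m n (A : 'M[R]_(m, n)) :
  \sum_(i < m) \sum_(j < n) A i j = 1 -> rho A setT setT = 1.
Proof.
move=> As.
have eR : volR A setT = 1 by rewrite /volR /drow sumT.
have eC : volC A setT = 1 by rewrite /volC /dcol sumT exchange_big.
have eA : aXY A setT setT = 1.
  by rewrite /aXY sumT; under eq_bigr => i _ do rewrite sumT.
by rewrite /rho eR eC eA mulr1 divr1.
Qed.

Lemma disc_cmp (R : rcfType) m n (A : 'M[R]_(m, n))
  (A_nneg : forall i j, 0 <= A i j)
  (A_sum : \sum_(i < m) \sum_(j < n) A i j = 1)
  (P X : {set 'I_m}) (Q Y : {set 'I_n}) :
  X \subset P -> Y \subset Q -> aXY A P Q = volR A P * volC A Q ->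
  discXY A X Y P Q <= discXY A X Y setT setT.
Proof.
move=> XP YQ hPQ.
case: (volR A P * volC A Q =P 0) => [z|nz].
  rewrite /discXY; have -> : volR A X * volC A Y = 0.
    move/eqP: z; rewrite mulf_eq0 => /orP[/eqP zP|/eqP zQ].
      have : volR A X <= 0 by rewrite -zP; apply: volR_sub.
      by move=> h; rewrite (@le_anti _ _ (volR A X) 0) ?mul0r // h volR_ge0.
    have : volC A Y <= 0 by rewrite -zQ; apply: volC_sub.
    by move=> h; rewrite (@le_anti _ _ (volC A Y) 0) ?mulr0 // h volC_ge0.
  by rewrite sqrtr0 !mulr0.
rewrite /discXY [rho A P Q]/rho hPQ divff; last by apply/eqP.
by rewrite rhoTT.
Qed.

Lemma le_bigmax_le (R : rcfType) (I : finType) (P : pred I) (F : I -> R) x j y :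
  P j -> y <= F j -> y <= \big[Num.max/x]_(i | P i) F i.
Proof. by move=> Pj H; apply: le_trans H (le_bigmax_cond _ _ Pj). Qed.

Lemma part1 (T : finType) (f1 : {ffun T -> 'I_1}) : part f1 ord0 = setT.
Proof. by apply/setP => x; rewrite !inE; apply/eqP; apply: ord1. Qed.

Theorem mainTheorem4 (R : rcfType) (m n k : nat) (A : 'M[R]_(m, n))
  (A_nneg : forall i j, 0 <= A i j)
  (A_sum : \sum_(i < m) \sum_(j < n) A i j = 1)
  (A_nondec : nondecomposable A)
  (f : {ffun 'I_m -> 'I_k}) (g : {ffun 'I_n -> 'I_k})
  (hf : proper_part f) (hg : proper_part g)
  (hind : forall a b : 'I_k,
     blocksum A f g a b =
       (\sum_(b' < k) blocksum A f g a b') * (\sum_(a' < k) blocksum A f g a' b)) :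
  forall l : nat, (2 <= l <= k)%N -> disck A l <= disck A 1.
Proof.
move=> [|l] // /andP[l2 lk].
have k0 : (0 < k)%N by apply: leq_trans lk.
pose h (a : 'I_k) : 'I_l.+1 := inord (minn a l).
pose f' := [ffun i => h (f i)]; pose g' := [ffun j => h (g j)].
have hsurj : forall b : 'I_l.+1, exists a : 'I_k, h a = b.
  move=> b; have bk : (b < k)%N by apply: leq_trans (ltn_ord b) lk.
  exists (Ordinal bk); apply: val_inj; rewrite /h /= inordK.
    by apply/minn_idPl; rewrite -ltnS.
  by rewrite ltnS geq_minr.
have pf' : proper_part f'.
  apply/forallP => b; have [a <-] := hsurj b.
  have /existsP [x /eqP fx] := forallP hf a.
  by apply/existsP; exists x; rewrite ffunE fx.
have pg' : proper_part g'.
  apply/forallP => b; have [a <-] := hsurj b.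
  have /existsP [x /eqP fx] := forallP hg a.
  by apply/existsP; exists x; rewrite ffunE fx.
have /existsP [i0 _] := forallP hf (Ordinal k0).
have /existsP [j0 _] := forallP hg (Ordinal k0).
have key : forall (f1 : {ffun 'I_m -> 'I_1}) (g1 : {ffun 'I_n -> 'I_1}),
    disc_part A f' g' <= disc_part A f1 g1.
  move=> f1 g1.
  have D0 : 0 <= disc_part A f1 g1 by apply: bigmax0_ge0.
  rewrite /disc_part; apply: bigmax_le => // a _.
  apply: bigmax_le => // b _.
  apply: bigmax_le => // X /andP [X0 XP].
  apply: bigmax_le => // Y /andP [Y0 YQ].
  have H := @disc_cmp R m n A A_nneg A_sum _ _ _ _ XP YQ
    (@merged_indep R m n k A f g hind l.+1 h a b).
  apply: le_trans H _.

  apply: le_trans _ (le_bigmax _ _ ord0).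

  apply: le_trans _ (le_bigmax _ _ ord0).
  rewrite /= !part1.
  have HX : (X != set0) && (X \subset setT) by rewrite X0 subsetT.
  have HY : (Y != set0) && (Y \subset setT) by rewrite Y0 subsetT.
  apply: (@le_bigmax_le _ _ _ _ _ X) => //; apply: (@le_bigmax_le _ _ _ _ _ Y) => //.
apply: le_trans (@bigmin_seq_le _ _ _ (disc_part A f' g') _) _.

  by apply/mapP; exists (f', g'); rewrite // mem_enum inE /= pf' pg'.
apply: le_bigmin_seq.
  apply/eqP => E.
  pose f1 : {ffun 'I_m -> 'I_1} := [ffun=> ord0].
  pose g1 : {ffun 'I_n -> 'I_1} := [ffun=> ord0].
  have : disc_part A f1 g1 \in [::]; last by [].
  rewrite -E; apply/mapP; exists (f1, g1); rewrite // mem_enum inE /=.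
  apply/andP; split; apply/forallP => a;
    apply/existsP; [exists i0 | exists j0]; by rewrite /f1 /g1 ffunE (ord1 a).
by move=> x /mapP [[f1 g1] _ ->]; apply: key.
Qed.
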